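(* Let $\tilde{\boldsymbol\Gamma}^\omega$ denote the fundamental solution $\boldsymbol\Gamma^\omega$ with the parameters $(\lambda,\mu,\rho)$ replaced by $(\tilde\lambda,\tilde\mu,\tilde\rho)=(\lambda/\delta,\mu/\delta,\rho/\epsilon)$, and let $\tau=\sqrt{\delta/\epsilon}$. Then as $\omega\to0^+$, $$\tilde{\boldsymbol\Gamma}^\omega(\mathbf{x})=\delta\boldsymbol\Gamma(\mathbf{x})+\delta\gamma_{\tau\omega}\mathbf{I}_2+\delta\omega^2\ln\omega\,\rho\tau^2\boldsymbol\Gamma_1(\mathbf{x})+\delta\omega^2\rho\tau^2\ln(\sqrt\rho\tau)\boldsymbol\Gamma_1(\mathbf{x})+\delta\omega^2\rho\tau^2\boldsymbol\Gamma_2(\mathbf{x})+\mathcal{O}(\delta\tau^4\omega^4\ln\omega+\delta\tau^4\omega^4),$$ where $\gamma_{\tau\omega}=\alpha_1\ln(\sqrt\rho\tau\omega)+\alpha$.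
   Context: Lamé constants $\lambda,\mu$, density $\rho>0$, $\delta,\epsilon>0$. For parameters $(\lambda,\mu,\rho)$, $c_s=\sqrt{\mu/\rho}$, $c_p=\sqrt{(\lambda+2\mu)/\rho}$, $k_s=\omega/c_s$, $k_p=\omega/c_p$, and $\boldsymbol\Gamma^\omega(\mathbf{x})=-\frac{\mathrm{i}}{4\mu}H_0^{(1)}(k_s|\mathbf{x}|)\mathbf{I}_2+\frac{\mathrm{i}}{4\omega^2\rho}\nabla\nabla\big(H_0^{(1)}(k_p|\mathbf{x}|)-H_0^{(1)}(k_s|\mathbf{x}|)\big)$. $\boldsymbol\Gamma(\mathbf{x})=\alpha_1\ln|\mathbf{x}|\mathbf{I}_2-\alpha_2\frac{\mathbf{x}\mathbf{x}^T}{|\mathbf{x}|^2}$, $\alpha_1=\frac1{4\pi}(\frac1\mu+\frac1{2\mu+\lambda})$, $\alpha_2=\frac1{4\pi}(\frac1\mu-\frac1{2\mu+\lambda})$; $E_c=2\gamma-\mathrm{i}\pi-2\ln2$; $\alpha=\frac{\alpha_1}2E_c+\frac{\alpha_2}2-\frac1{8\pi}(\frac1\mu\ln\mu+\frac1{2\mu+\lambda}\ln(2\mu+\lambda))$. $\boldsymbol\Gamma_1(\mathbf{x})=\beta_2|\mathbf{x}|^2\mathbf{I}_2+\beta_3\mathbf{x}\mathbf{x}^T$, $\boldsymbol\Gamma_2(\mathbf{x})=\beta_1|\mathbf{x}|^2\mathbf{I}_2+\beta_2\ln|\mathbf{x}||\mathbf{x}|^2\mathbf{I}_2+\beta_3\ln|\mathbf{x}|\mathbf{x}\mathbf{x}^T+\beta_4\mathbf{x}\mathbf{x}^T$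 with $\beta_2=-\frac1{2^5\pi}(\frac3{\mu^2}+\frac1{(2\mu+\lambda)^2})$, $\beta_3=\frac1{2^4\pi}(\frac1{\mu^2}-\frac1{(2\mu+\lambda)^2})$, $\beta_1=(\frac12E_c-1)\beta_2-\frac18\beta_3+\frac1{2^6\pi}(\frac3{\mu^2}\ln\mu+\frac{\ln(2\mu+\lambda)}{(2\mu+\lambda)^2})$, $\beta_4=\frac14(2E_c-3)\beta_3-\frac1{2^5\pi}(\frac{\ln\mu}{\mu^2}-\frac{\ln(2\mu+\lambda)}{(2\mu+\lambda)^2})$ (all with the unscaled $\lambda,\mu$). *)

(* Defs.v *)
From Stdlib Require Import Reals Lra Arith.
From Coquelicot Require Import Coquelicot.
Open Scope R_scope.

Fixpoint harm (n : nat) : R :=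
  match n with O => 0 | S m => harm m + / INR (S m) end.

Definition euler_gamma : R := real (Lim_seq (fun n => harm n - ln (INR n))).

Definition besselJ0 (t : R) : R :=
  Series (fun k => (-1) ^ k * (t / 2) ^ (2 * k) / (INR (Factorial.fact k)) ^ 2).

Definition besselY0 (t : R) : R :=
  2 / PI * ((ln (t / 2) + euler_gamma) * besselJ0 t
            + Series (fun k => (-1) ^ (S k) * harm k * (t / 2) ^ (2 * k)
                               / (INR (Factorial.fact k)) ^ 2)).

Definition hankel10 (t : R) : C := (besselJ0 t, besselY0 t).

(** Points of R^2, coordinates indexed by bool (false = 1st, true = 2nd). *)
Definition coord (x : R * R) (i : bool) : R := if i then snd x else fst x.
Definition setc (x : R * R) (i : bool) (t : R) : R * R :=
  if i then (fst x, t) else (t, snd x).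
Definition norm2 (x : R * R) : R := sqrt (fst x ^ 2 + snd x ^ 2).
Definition kron (i j : bool) : R := if Bool.eqb i j then 1 else 0.

Definition partial (i : bool) (f : R * R -> R) (x : R * R) : R :=
  Derive (fun t => f (setc x i t)) (coord x i).

Definition hessC (i j : bool) (g : R * R -> C) (x : R * R) : C :=
  (partial i (partial j (fun y => fst (g y))) x,
   partial i (partial j (fun y => snd (g y))) x).

Definition Gamma_omega (lam mu rho w : R) (x : R * R) (i j : bool) : C :=
  let cs := sqrt (mu / rho) in
  let cp := sqrt ((lam + 2 * mu) / rho) in
  let ks := w / cs in
  let kp := w / cp in
  (- (Ci / RtoC (4 * mu)) * hankel10 (ks * norm2 x) * RtoC (kron i j)
   + (Ci / RtoC (4 * w ^ 2 * rho))
     * hessC i j (fun y => hankel10 (kp * norm2 y) - hankel10 (ks * norm2 y)) x)%C.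

Definition alpha1 (lam mu : R) : R := / (4 * PI) * (/ mu + / (2 * mu + lam)).
Definition alpha2 (lam mu : R) : R := / (4 * PI) * (/ mu - / (2 * mu + lam)).
Definition Ec : C := (2 * euler_gamma - 2 * ln 2, - PI).
Definition alpha_c (lam mu : R) : C :=
  (RtoC (alpha1 lam mu / 2) * Ec + RtoC (alpha2 lam mu / 2)
   - RtoC (/ (8 * PI) * (/ mu * ln mu + / (2 * mu + lam) * ln (2 * mu + lam))))%C.

Definition beta2 (lam mu : R) : R :=
  - / (2 ^ 5 * PI) * (3 / mu ^ 2 + / (2 * mu + lam) ^ 2).
Definition beta3 (lam mu : R) : R :=
  / (2 ^ 4 * PI) * (/ mu ^ 2 - / (2 * mu + lam) ^ 2).
Definition beta1 (lam mu : R) : C :=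
  ((RtoC (/ 2) * Ec - 1) * RtoC (beta2 lam mu) - RtoC (/ 8 * beta3 lam mu)
   + RtoC (/ (2 ^ 6 * PI) * (3 / mu ^ 2 * ln mu + ln (2 * mu + lam) / (2 * mu + lam) ^ 2)))%C.
Definition beta4 (lam mu : R) : C :=
  (RtoC (/ 4) * (2 * Ec - 3) * RtoC (beta3 lam mu)
   - RtoC (/ (2 ^ 5 * PI) * (ln mu / mu ^ 2 - ln (2 * mu + lam) / (2 * mu + lam) ^ 2)))%C.

Definition Gamma0 (lam mu : R) (x : R * R) (i j : bool) : R :=
  alpha1 lam mu * ln (norm2 x) * kron i j
  - alpha2 lam mu * (coord x i * coord x j) / (norm2 x) ^ 2.
Definition Gamma1 (lam mu : R) (x : R * R) (i j : bool) : R :=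
  beta2 lam mu * (norm2 x) ^ 2 * kron i j + beta3 lam mu * (coord x i * coord x j).
Definition Gamma2 (lam mu : R) (x : R * R) (i j : bool) : C :=
  (beta1 lam mu * RtoC ((norm2 x) ^ 2 * kron i j)
   + RtoC (beta2 lam mu * ln (norm2 x) * (norm2 x) ^ 2 * kron i j
           + beta3 lam mu * ln (norm2 x) * (coord x i * coord x j))
   + beta4 lam mu * RtoC (coord x i * coord x j))%C.

Definition gamma_tw (lam mu rho tau w : R) : C :=
  (RtoC (alpha1 lam mu * ln (sqrt rho * tau * w)) + alpha_c lam mu)%C.

Definition expansion (lam mu rho delta tau w : R) (x : R * R) (i j : bool) : C :=
  (RtoC (delta * Gamma0 lam mu x i j)
   + RtoC delta * gamma_tw lam mu rho tau w * RtoC (kron i j)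
   + RtoC (delta * w ^ 2 * ln w * rho * tau ^ 2 * Gamma1 lam mu x i j)
   + RtoC (delta * w ^ 2 * rho * tau ^ 2 * ln (sqrt rho * tau) * Gamma1 lam mu x i j)
   + RtoC (delta * w ^ 2 * rho * tau ^ 2) * Gamma2 lam mu x i j)%C.

(* Main.v *)
Require Import Defs.
From Stdlib Require Import Reals Lra Lia Arith Factorial.
From Coquelicot Require Import Coquelicot.
Open Scope R_scope.

Definition cb1 (a : nat -> R) := forall n, Rabs (a n) <= 1.

Definition aj (n : nat) : R := (-1) ^ n * / (INR (Factorial.fact n)) ^ 2.
Definition asg (n : nat) : R := (-1) ^ (S n) * harm n * / (INR (Factorial.fact n)) ^ 2.

Lemma Fge1 n : 1 <= INR (Factorial.fact n).
Proof. apply (le_INR 1). apply Nat.le_succ_l. apply lt_O_fact. Qed.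
Lemma FS n : INR (Factorial.fact (S n)) = INR (S n) * INR (Factorial.fact n).
Proof. rewrite fact_simpl, mult_INR. reflexivity. Qed.
Lemma harm_bnd n : 0 <= harm n <= INR n.
Proof.
  induction n as [|n IH]. simpl; lra. change (harm (S n)) with (harm n + / INR (S n)).
  rewrite S_INR. generalize (pos_INR n); intro Hn.
  assert (Hinv : 0 < / (INR n + 1) <= 1).
  { split. apply Rinv_0_lt_compat; lra. rewrite <- Rinv_1. apply Rinv_le_contravar; lra. }
  lra.
Qed.
Lemma Rabs_sgn n x : Rabs ((-1) ^ n * x) = Rabs x.
Proof. rewrite Rabs_mult, pow_1_abs. ring. Qed.

Lemma ratio_le1 A F : 0 <= A -> A <= F ^ 2 -> 0 < F -> Rabs (A * / F ^ 2) <= 1.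
Proof.
  intros HA HF HF0. rewrite Rabs_pos_eq.
  2:{ apply Rmult_le_pos; auto. apply Rlt_le, Rinv_0_lt_compat, pow_lt; auto. }
  assert (0 < F ^ 2) by (apply pow_lt; auto).
  apply (Rmult_le_reg_r (F^2)); auto. rewrite Rmult_assoc, Rinv_l; lra.
Qed.

Lemma cb_aj : cb1 aj.
Proof.
  intro n. unfold aj. rewrite Rabs_sgn. replace (/ INR (Factorial.fact n) ^ 2) with (1 * / INR (Factorial.fact n) ^ 2) by ring.
  apply ratio_le1; generalize (Fge1 n); intros; nra.
Qed.

Lemma cb_aj1 : cb1 (PS_derive aj).
Proof.
  intro n. unfold PS_derive, aj. rewrite FS.
  replace (INR (S n) * ((-1) ^ S n * / (INR (S n) * INR (Factorial.fact n)) ^ 2))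
    with ((-1) ^ S n * (INR (S n) * / (INR (S n) * INR (Factorial.fact n)) ^ 2)) by ring.
  rewrite Rabs_sgn. generalize (Fge1 n) (pos_INR n); rewrite S_INR; intros.
  apply ratio_le1. nra. 2: nra.
  assert (INR n + 1 <= (INR n + 1) * INR (Factorial.fact n)) by nra.
  assert (1 <= (INR n + 1) * INR (Factorial.fact n)) by nra. nra.
Qed.

Lemma cb_aj2 : cb1 (PS_derive (PS_derive aj)).
Proof.
  intro n. unfold PS_derive, aj. rewrite !FS.
  replace (INR (S n) * (INR (S (S n)) * ((-1) ^ S (S n) * / (INR (S (S n)) * (INR (S n) * INR (Factorial.fact n))) ^ 2)))
    with ((-1) ^ S (S n) * ((INR (S n) * INR (S (S n))) * / (INR (S (S n)) * (INR (S n) * INR (Factorial.fact n))) ^ 2)) by ring.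
  rewrite Rabs_sgn. generalize (Fge1 n) (pos_INR n); rewrite !S_INR; intros.
  apply ratio_le1. nra. 2: nra.
  set (m := INR n) in *. set (F := INR (Factorial.fact n)) in *.
  assert (1 <= (m+1+1)*(m+1)) by nra.
  assert ((m+1+1)*(m+1) <= (m + 1 + 1) * ((m + 1) * F)) by nra.
  nra.
Qed.

Lemma cb_asg : cb1 asg.
Proof.
  intro n. unfold asg. rewrite Rmult_assoc, Rabs_sgn. generalize (Fge1 n) (harm_bnd n) (pos_INR n); intros.
  apply ratio_le1; try nra.
  assert (INR n <= INR (Factorial.fact n)). { apply le_INR. destruct n. simpl; lia.
    rewrite fact_simpl. generalize (lt_O_fact n). nia. }
  nra.
Qed.

Lemma cb_asg1 : cb1 (PS_derive asg).
Proof.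
  intro n. unfold PS_derive, asg. rewrite FS.
  replace (INR (S n) * ((-1) ^ S (S n) * harm (S n) * / (INR (S n) * INR (Factorial.fact n)) ^ 2))
    with ((-1) ^ S (S n) * (INR (S n) * harm (S n) * / (INR (S n) * INR (Factorial.fact n)) ^ 2)) by ring.
  rewrite Rabs_sgn. generalize (Fge1 n) (pos_INR n) (harm_bnd (S n)); rewrite S_INR; intros.
  set (m := INR n) in *. set (F := INR (Factorial.fact n)) in *.
  apply ratio_le1. nra. 2: nra.
  assert ((m+1)*harm (S n) <= (m+1)*(m+1)) by nra.
  assert ((m+1) <= (m+1)*F) by nra.
  assert ((m+1)^2 <= ((m+1)*F)^2) by (apply pow_incr; nra). nra.
Qed.

Lemma cb_asg2 : cb1 (PS_derive (PS_derive asg)).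
Proof.
  intro n. unfold PS_derive, asg. rewrite !FS.
  replace (INR (S n) * (INR (S (S n)) * ((-1) ^ S (S (S n)) * harm (S (S n)) * / (INR (S (S n)) * (INR (S n) * INR (Factorial.fact n))) ^ 2)))
    with ((-1) ^ S (S (S n)) * ((INR (S n) * INR (S (S n)) * harm (S (S n))) * / (INR (S (S n)) * (INR (S n) * INR (Factorial.fact n))) ^ 2)) by ring.
  rewrite Rabs_sgn. generalize (Fge1 n) (pos_INR n) (harm_bnd (S (S n))); rewrite !S_INR; intros.
  apply ratio_le1. nra. 2: nra.
  set (m := INR n) in *. set (F := INR (Factorial.fact n)) in *.
  assert ((m+1)*(m+1+1)*harm (S (S n)) <= (m+1)*(m+1+1)*(m+1+1)) by nra.
  assert ((m+1)*(m+1+1)*(m+1+1) <= ((m+1+1)*(m+1))^2) by nra.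
  assert (((m+1+1)*(m+1))^2 <= ((m + 1 + 1) * ((m + 1) * F))^2) by (apply pow_incr; nra).
  lra.
Qed.

Lemma cb1_radius a : cb1 a -> Rbar_le 1 (CV_radius a).
Proof.
  intros H. destruct (CV_radius_bounded a) as [Hub _].
  apply Hub. exists 1. intros n. rewrite pow1, Rmult_1_r. apply H.
Qed.

Lemma cb1_lt a s : cb1 a -> Rabs s <= /2 -> Rbar_lt (Rabs s) (CV_radius a).
Proof.
  intros H Hs. generalize (cb1_radius a H). destruct (CV_radius a); simpl; intros; lra.
Qed.

Lemma cb1_decr a n : cb1 a -> cb1 (PS_decr_n a n).
Proof. intros H k. unfold PS_decr_n. apply H. Qed.

Lemma cb1_bound a s : cb1 a -> Rabs s <= /2 -> Rabs (PSeries a s) <= 2.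
Proof.
  intros H Hs. unfold PSeries.
  assert (Hg : ex_series (fun n => (/2) ^ n)) by (apply ex_series_geom; rewrite Rabs_pos_eq; lra).
  assert (Hle : forall n, 0 <= Rabs (a n * s ^ n) <= (/2)^n).
  { intros n; split; [apply Rabs_pos|]. rewrite Rabs_mult, <- RPow_abs.
    replace ((/2)^n) with (1 * (/2)^n) by ring.
    apply Rmult_le_compat; [apply Rabs_pos| apply pow_le; apply Rabs_pos| apply H|].
    apply pow_incr. split; [apply Rabs_pos|lra]. }
  assert (Hex : ex_series (fun n => Rabs (a n * s ^ n))).
  { apply (@ex_series_le R_AbsRing R_CompleteNormedModule _ (fun n => (/2)^n)); auto.
    intros n. unfold norm; simpl. rewrite Rabs_Rabsolu. apply Hle. }
  eapply Rle_trans. apply Series_Rabs; auto.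
  eapply Rle_trans. apply Series_le; [apply Hle| auto].
  rewrite (is_series_unique _ (/(1 - /2))). lra.
  apply is_series_geom. rewrite Rabs_pos_eq; lra.
Qed.

Definition J s := PSeries aj s.
Definition J1 s := PSeries (PS_derive aj) s.
Definition J2 s := PSeries (PS_derive (PS_derive aj)) s.
Definition Sg s := PSeries asg s.
Definition Sg1 s := PSeries (PS_derive asg) s.
Definition Sg2 s := PSeries (PS_derive (PS_derive asg)) s.

Lemma cb1_ex a s : cb1 a -> Rabs s <= /2 -> ex_pseries a s.
Proof. intros; apply CV_radius_inside, cb1_lt; auto. Qed.

Lemma J_exp s : Rabs s <= /2 -> J s = 1 - s + s^2/4 + s^3 * PSeries (PS_decr_n aj 3) s.
Proof.
  intros Hs. unfold J. rewrite (PSeries_decr_n aj 2 s) by (apply cb1_ex; auto; apply cb_aj).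
  simpl sum_f_R0. unfold aj. simpl. field.
Qed.
Lemma J1_exp s : Rabs s <= /2 -> J1 s = -1 + s/2 + s^2 * PSeries (PS_decr_n (PS_derive aj) 2) s.
Proof.
  intros Hs. unfold J1. rewrite (PSeries_decr_n _ 1 s) by (apply cb1_ex; auto; apply cb_aj1).
  simpl sum_f_R0. unfold PS_derive, aj. simpl. field.
Qed.
Lemma J2_exp s : Rabs s <= /2 -> J2 s = /2 + s * PSeries (PS_decr_n (PS_derive (PS_derive aj)) 1) s.
Proof.
  intros Hs. unfold J2. rewrite (PSeries_decr_n _ 0 s) by (apply cb1_ex; auto; apply cb_aj2).
  simpl sum_f_R0. unfold PS_derive, aj. simpl. field.
Qed.
Lemma Sg_exp s : Rabs s <= /2 -> Sg s = s + s^2 * PSeries (PS_decr_n asg 2) s.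
Proof.
  intros Hs. unfold Sg. rewrite (PSeries_decr_n asg 1 s) by (apply cb1_ex; auto; apply cb_asg).
  simpl sum_f_R0. unfold asg. simpl. field.
Qed.
Lemma Sg1_exp s : Rabs s <= /2 -> Sg1 s = 1 - 3/4 * s + s^2 * PSeries (PS_decr_n (PS_derive asg) 2) s.
Proof.
  intros Hs. unfold Sg1. rewrite (PSeries_decr_n _ 1 s) by (apply cb1_ex; auto; apply cb_asg1).
  simpl sum_f_R0. unfold PS_derive, asg. simpl. field.
Qed.
Lemma Sg2_exp s : Rabs s <= /2 -> Sg2 s = -3/4 + s * PSeries (PS_decr_n (PS_derive (PS_derive asg)) 1) s.
Proof.
  intros Hs. unfold Sg2. rewrite (PSeries_decr_n _ 0 s) by (apply cb1_ex; auto; apply cb_asg2).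
  simpl sum_f_R0. unfold PS_derive, asg. simpl. field.
Qed.

Lemma besselJ0_J t : besselJ0 t = J ((t/2)^2).
Proof.
  unfold besselJ0, J, PSeries. apply Series_ext. intro n. rewrite <- pow_mult. unfold aj. unfold Rdiv. ring.
Qed.
Lemma besselY0_J t : besselY0 t = 2 / PI * ((ln (t/2) + euler_gamma) * J ((t/2)^2) + Sg ((t/2)^2)).
Proof.
  unfold besselY0. rewrite besselJ0_J. f_equal. f_equal. unfold Sg, PSeries. apply Series_ext. intro n.
  rewrite <- pow_mult. unfold asg. unfold Rdiv. ring.
Qed.

Definition qf (y : R * R) := fst y ^ 2 + snd y ^ 2.

Lemma loc_open h t0 a b : continuity_pt h t0 -> a < h t0 < b -> locally t0 (fun t => a < h t < b).
Proof.
  intros Hc Hab. assert (He : 0 < Rmin (h t0 - a) (b - h t0)) by (apply Rmin_pos; lra).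
  apply continuity_pt_locally with (eps := mkposreal _ He) in Hc.
  eapply filter_imp; [|exact Hc]. intros u Hu. simpl in Hu.
  generalize (Rmin_l (h t0 - a) (b - h t0)) (Rmin_r (h t0 - a) (b - h t0)); intros.
  apply Rabs_def2 in Hu. lra.
Qed.

Lemma loc_sq c t0 a b : a < c + t0 ^ 2 < b -> locally t0 (fun t => a < c + t ^ 2 < b).
Proof. intros; apply (loc_open (fun t => c + t ^ 2)); auto. reg. Qed.
Lemma loc_sq' c t0 a b : a < t0 ^ 2 + c < b -> locally t0 (fun t => a < t ^ 2 + c < b).
Proof. intros; apply (loc_open (fun t => t ^ 2 + c)); auto. reg. Qed.

Lemma Derive_eta (G : R -> R) x l : is_derive G x l -> Derive (fun t => G t) x = l.
Proof. intros H; apply is_derive_unique; auto. Qed.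

Lemma hess_step1 (G G1 : R -> R) Q0 Q1 (f : R * R -> R) (y : R * R) (j : bool) :
  (forall q, Q0 < q < Q1 -> is_derive G q (G1 q)) ->
  (forall y, Q0 < qf y < Q1 -> f y = G (qf y)) ->
  Q0 < qf y < Q1 ->
  partial j f y = 2 * coord y j * G1 (qf y).
Proof.
  intros HG Hf Hy. unfold partial. apply is_derive_unique.
  destruct y as [y1 y2]; destruct j; unfold qf in *; cbn [coord setc fst snd] in *.
  - apply (is_derive_ext_loc (fun t => G (y1 ^ 2 + t ^ 2))).
    + eapply filter_imp; [|exact (loc_sq (y1^2) y2 Q0 Q1 Hy)]. intros t Ht. symmetry. apply (Hf (y1, t)). simpl; auto.
    + assert (HD := HG _ Hy). auto_derive. eexists; exact HD.
      match goal with |- context [Derive _ ?a] => replace a with (y1^2+y2^2) by ring end. rewrite (Derive_eta _ _ _ HD). ring.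
  - apply (is_derive_ext_loc (fun t => G (t ^ 2 + y2 ^ 2))).
    + eapply filter_imp; [|exact (loc_sq' (y2^2) y1 Q0 Q1 Hy)]. intros t Ht. symmetry. apply (Hf (t, y2)). simpl; auto.
    + assert (HD := HG _ Hy). auto_derive. eexists; exact HD.
      match goal with |- context [Derive _ ?a] => replace a with (y1^2+y2^2) by ring end. rewrite (Derive_eta _ _ _ HD). ring.
Qed.

Lemma hess_radial (G G1 G2 : R -> R) Q0 Q1 (f : R * R -> R) (x : R * R) (i j : bool) :
  (forall q, Q0 < q < Q1 -> is_derive G q (G1 q)) ->
  (forall q, Q0 < q < Q1 -> is_derive G1 q (G2 q)) ->
  (forall y, Q0 < qf y < Q1 -> f y = G (qf y)) ->
  Q0 < qf x < Q1 ->
  partial i (partial j f) x = 4 * G2 (qf x) * (coord x i * coord x j) + 2 * G1 (qf x) * kron i j.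
Proof.
  intros HG HG1 Hf Hx. unfold partial at 1. apply is_derive_unique.
  assert (S1 := fun y => hess_step1 G G1 Q0 Q1 f y j HG Hf).
  assert (HD := HG1 _ Hx).
  destruct x as [x1 x2]; unfold qf in *; cbn [coord setc fst snd] in *.
  destruct i.
  - apply (is_derive_ext_loc (fun t => 2 * coord (x1, t) j * G1 (x1 ^ 2 + t ^ 2))).
    + eapply filter_imp; [|exact (loc_sq (x1^2) x2 Q0 Q1 Hx)]. intros t Ht. symmetry. apply (S1 (x1, t)). exact Ht.
    + destruct j; cbn [coord fst snd kron Bool.eqb]; auto_derive; try (eexists; exact HD);
      match goal with |- context [Derive _ ?a] => replace a with (x1^2+x2^2) by ring end;
      rewrite (Derive_eta _ _ _ HD); ring.
  - apply (is_derive_ext_loc (fun t => 2 * coord (t, x2) j * G1 (t ^ 2 + x2 ^ 2))).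
    + eapply filter_imp; [|exact (loc_sq' (x2^2) x1 Q0 Q1 Hx)]. intros t Ht. symmetry. apply (S1 (t, x2)). exact Ht.
    + destruct j; cbn [coord fst snd kron Bool.eqb]; auto_derive; try (eexists; exact HD);
      match goal with |- context [Derive _ ?a] => replace a with (x1^2+x2^2) by ring end;
      rewrite (Derive_eta _ _ _ HD); ring.
Qed.

Lemma dJ s : Rabs s <= /2 -> is_derive J s (J1 s).
Proof. intros; apply is_derive_PSeries, cb1_lt; auto; apply cb_aj. Qed.
Lemma dJ1 s : Rabs s <= /2 -> is_derive J1 s (J2 s).
Proof. intros; apply is_derive_PSeries, cb1_lt; auto; apply cb_aj1. Qed.
Lemma dSg s : Rabs s <= /2 -> is_derive Sg s (Sg1 s).
Proof. intros; apply is_derive_PSeries, cb1_lt; auto; apply cb_asg. Qed.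
Lemma dSg1 s : Rabs s <= /2 -> is_derive Sg1 s (Sg2 s).
Proof. intros; apply is_derive_PSeries, cb1_lt; auto; apply cb_asg1. Qed.

Definition FI s := 2 / PI * ((ln s / 2 + euler_gamma) * J s + Sg s).
Definition FI1 s := 2 / PI * (J s / (2 * s) + (ln s / 2 + euler_gamma) * J1 s + Sg1 s).
Definition FI2 s := 2 / PI * (- J s / (2 * s ^ 2) + J1 s / s + (ln s / 2 + euler_gamma) * J2 s + Sg2 s).

Lemma abs_half s : 0 < s <= /2 -> Rabs s <= /2.
Proof. intros; rewrite Rabs_pos_eq; lra. Qed.

Lemma dFI s : 0 < s <= /2 -> is_derive FI s (FI1 s).
Proof.
  intros Hs. assert (H1 := dJ s (abs_half s Hs)). assert (H2 := dSg s (abs_half s Hs)).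
  unfold FI, FI1. auto_derive.
  - repeat split; try lra; eexists; eassumption.
  - rewrite (Derive_eta _ _ _ H1), (Derive_eta _ _ _ H2). field. split; [lra|]. apply PI_neq0.
Qed.

Lemma dFI1 s : 0 < s <= /2 -> is_derive FI1 s (FI2 s).
Proof.
  intros Hs. assert (H0 := dJ s (abs_half s Hs)). assert (H1 := dJ1 s (abs_half s Hs)). assert (H2 := dSg1 s (abs_half s Hs)).
  unfold FI1, FI2. auto_derive.
  - repeat split; try lra; eexists; eassumption.
  - rewrite (Derive_eta _ _ _ H0), (Derive_eta _ _ _ H1), (Derive_eta _ _ _ H2). field. split; [lra|]. apply PI_neq0.
Qed.

Lemma dJ' s : 0 < s <= /2 -> is_derive J s (J1 s).
Proof. intros; apply dJ, abs_half; auto. Qed.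
Lemma dJ1' s : 0 < s <= /2 -> is_derive J1 s (J2 s).
Proof. intros; apply dJ1, abs_half; auto. Qed.

Lemma two_K (F F1 : R -> R) Kp Ks Q0 Q1 q :
  (forall s, 0 < s <= /2 -> is_derive F s (F1 s)) ->
  0 < Kp -> 0 < Ks -> 0 <= Q0 -> Kp * Q1 <= /2 -> Ks * Q1 <= /2 -> Q0 < q < Q1 ->
  is_derive (fun q => F (Kp * q) - F (Ks * q)) q (Kp * F1 (Kp * q) - Ks * F1 (Ks * q)).
Proof.
  intros HF Hp Hs HQ0 HpQ HsQ Hq.
  assert (A1 : 0 < Kp * q <= /2) by (split; [nra|]; nra).
  assert (A2 : 0 < Ks * q <= /2) by (split; [nra|]; nra).
  assert (D1 := HF _ A1). assert (D2 := HF _ A2).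
  auto_derive.
  - split; [eexists; eassumption|split; [eexists; eassumption|exact I]].
  - rewrite (Derive_eta _ _ _ D1), (Derive_eta _ _ _ D2). ring.
Qed.

Lemma cpx_gamma (a b u v m r d : R) : m <> 0 -> r <> 0 ->
  (- (Ci / RtoC m) * (a, b) * RtoC d + (Ci / RtoC r) * (u, v))%C = (b * d / m - v / r, - a * d / m + u / r).
Proof.
  intros Hm Hr. apply injective_projections; simpl; field; auto.
Qed.

Lemma exp_re lam mu rho delta tau w x i j :
  fst (expansion lam mu rho delta tau w x i j) =
  delta * Gamma0 lam mu x i j + delta * (alpha1 lam mu * ln (sqrt rho * tau * w) + (alpha1 lam mu / 2 * (2 * euler_gamma - 2 * ln 2) + alpha2 lam mu / 2
     - / (8 * PI) * (/ mu * ln mu + / (2 * mu + lam) * ln (2 * mu + lam)))) * kron i j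
  + delta * w ^ 2 * ln w * rho * tau ^ 2 * Gamma1 lam mu x i j
  + delta * w ^ 2 * rho * tau ^ 2 * ln (sqrt rho * tau) * Gamma1 lam mu x i j
  + delta * w ^ 2 * rho * tau ^ 2 * (
     ((/2 * (2 * euler_gamma - 2 * ln 2) - 1) * beta2 lam mu - / 8 * beta3 lam mu
       + / (2 ^ 6 * PI) * (3 / mu ^ 2 * ln mu + ln (2 * mu + lam) / (2 * mu + lam) ^ 2)) * (norm2 x ^ 2 * kron i j)
     + (beta2 lam mu * ln (norm2 x) * norm2 x ^ 2 * kron i j + beta3 lam mu * ln (norm2 x) * (coord x i * coord x j))
     + (/ 4 * (2 * (2 * euler_gamma - 2 * ln 2) - 3) * beta3 lam mu
        - / (2 ^ 5 * PI) * (ln mu / mu ^ 2 - ln (2 * mu + lam) / (2 * mu + lam) ^ 2)) * (coord x i * coord x j)).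
Proof.
  unfold expansion, Gamma2, gamma_tw, alpha_c, beta1, beta4, Ec. simpl. ring.
Qed.

Lemma exp_im lam mu rho delta tau w x i j :
  snd (expansion lam mu rho delta tau w x i j) =
  delta * (alpha1 lam mu / 2 * (- PI)) * kron i j
  + delta * w ^ 2 * rho * tau ^ 2 * (
     (/2 * (- PI) * beta2 lam mu) * (norm2 x ^ 2 * kron i j)
     + (/ 4 * (2 * (- PI)) * beta3 lam mu) * (coord x i * coord x j)).
Proof.
  unfold expansion, Gamma2, gamma_tw, alpha_c, beta1, beta4, Ec. simpl. ring.
Qed.

Lemma hank_eq k y : 0 < k -> 0 < qf y ->
  hankel10 (k * norm2 y) = (J ((k / 2) ^ 2 * qf y), FI ((k / 2) ^ 2 * qf y)).
Proof.
  intros Hk Hq. unfold hankel10. rewrite besselJ0_J, besselY0_J.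
  assert (Hn : norm2 y = sqrt (qf y)) by reflexivity.
  assert (E : (k * norm2 y / 2) ^ 2 = (k / 2) ^ 2 * qf y).
  { rewrite Hn. replace ((k * sqrt (qf y) / 2) ^ 2) with ((k / 2) ^ 2 * (sqrt (qf y)) ^ 2) by (unfold Rdiv; ring).
    rewrite pow2_sqrt; lra. }
  assert (Hpos : 0 < k * norm2 y / 2).
  { rewrite Hn. apply Rmult_lt_0_compat; [apply Rmult_lt_0_compat; auto; apply sqrt_lt_R0; auto| lra]. }
  assert (L : ln (k * norm2 y / 2) = ln ((k / 2) ^ 2 * qf y) / 2).
  { rewrite <- E, ln_pow by auto. simpl. field. }
  rewrite E, L. unfold FI. reflexivity.
Qed.

Lemma two_K' (F F1 : R -> R) a b Kp Ks Q0 Q1 q :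
  (forall s, 0 < s <= /2 -> is_derive F s (F1 s)) ->
  0 < Kp -> 0 < Ks -> 0 <= Q0 -> Kp * Q1 <= /2 -> Ks * Q1 <= /2 -> Q0 < q < Q1 ->
  is_derive (fun q => a * F (Kp * q) - b * F (Ks * q)) q (a * Kp * F1 (Kp * q) - b * Ks * F1 (Ks * q)).
Proof.
  intros HF Hp Hs HQ0 HpQ HsQ Hq.
  assert (A1 : 0 < Kp * q <= /2) by (split; [nra|]; nra).
  assert (A2 : 0 < Ks * q <= /2) by (split; [nra|]; nra).
  assert (D1 := HF _ A1). assert (D2 := HF _ A2).
  auto_derive.
  - split; [eexists; eassumption|split; [eexists; eassumption|exact I]].
  - rewrite (Derive_eta _ _ _ D1), (Derive_eta _ _ _ D2). ring.
Qed.

Lemma hess_two (F F1 F2 : R -> R) (f : R * R -> R) Kp Ks x i j :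
  (forall s, 0 < s <= /2 -> is_derive F s (F1 s)) ->
  (forall s, 0 < s <= /2 -> is_derive F1 s (F2 s)) ->
  0 < Kp -> 0 < Ks -> Kp * (2 * qf x) <= /2 -> Ks * (2 * qf x) <= /2 -> 0 < qf x ->
  (forall y, 0 < qf y -> f y = F (Kp * qf y) - F (Ks * qf y)) ->
  partial i (partial j f) x =
  4 * (Kp ^ 2 * F2 (Kp * qf x) - Ks ^ 2 * F2 (Ks * qf x)) * (coord x i * coord x j)
  + 2 * (Kp * F1 (Kp * qf x) - Ks * F1 (Ks * qf x)) * kron i j.
Proof.
  intros HF HF1 Hp Hs HpQ HsQ Hq Hf.
  rewrite (hess_radial (fun q => 1 * F (Kp * q) - 1 * F (Ks * q))
                       (fun q => 1 * Kp * F1 (Kp * q) - 1 * Ks * F1 (Ks * q))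
                       (fun q => 1 * Kp * Kp * F2 (Kp * q) - 1 * Ks * Ks * F2 (Ks * q)) (qf x / 2) (2 * qf x)).
  - ring.
  - intros q Hq'. apply (two_K' F F1 1 1 Kp Ks (qf x / 2) (2 * qf x)); auto; lra.
  - intros q Hq'. apply (two_K' F1 F2 (1 * Kp) (1 * Ks) Kp Ks (qf x / 2) (2 * qf x)); auto; lra.
  - intros y Hy. rewrite Hf by lra. ring.
  - lra.
Qed.

Lemma Gamma_explicit lamp mup rhop w x i j :
  0 < mup -> 0 < lamp + 2 * mup -> 0 < rhop -> 0 < w -> 0 < qf x ->
  let Ks := (w / sqrt (mup / rhop) / 2) ^ 2 in
  let Kp := (w / sqrt ((lamp + 2 * mup) / rhop) / 2) ^ 2 in
  Kp * (2 * qf x) <= /2 -> Ks * (2 * qf x) <= /2 ->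
  let P := coord x i * coord x j in let d := kron i j in
  let HI := 4 * (Kp ^ 2 * FI2 (Kp * qf x) - Ks ^ 2 * FI2 (Ks * qf x)) * P + 2 * (Kp * FI1 (Kp * qf x) - Ks * FI1 (Ks * qf x)) * d in
  let HR := 4 * (Kp ^ 2 * J2 (Kp * qf x) - Ks ^ 2 * J2 (Ks * qf x)) * P + 2 * (Kp * J1 (Kp * qf x) - Ks * J1 (Ks * qf x)) * d in
  Gamma_omega lamp mup rhop w x i j =
  (FI (Ks * qf x) * d / (4 * mup) - HI / (4 * w ^ 2 * rhop),
   - J (Ks * qf x) * d / (4 * mup) + HR / (4 * w ^ 2 * rhop)).
Proof.
  intros Hm Ha Hr Hw Hq Ks Kp HpQ HsQ P d HI HR.
  assert (Hks : 0 < w / sqrt (mup / rhop)).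
  { apply Rdiv_lt_0_compat; auto. apply sqrt_lt_R0. apply Rdiv_lt_0_compat; auto. }
  assert (Hkp : 0 < w / sqrt ((lamp + 2 * mup) / rhop)).
  { apply Rdiv_lt_0_compat; auto. apply sqrt_lt_R0. apply Rdiv_lt_0_compat; auto. }
  assert (HKs : 0 < Ks) by (unfold Ks; apply pow_lt; lra).
  assert (HKp : 0 < Kp) by (unfold Kp; apply pow_lt; lra).
  unfold Gamma_omega, hessC. cbv zeta.
  rewrite (hess_two J J1 J2 _ Kp Ks x i j dJ' dJ1' HKp HKs HpQ HsQ Hq).
  2:{ intros y Hy. rewrite !hank_eq by auto. fold Kp Ks. simpl. ring. }
  rewrite (hess_two FI FI1 FI2 _ Kp Ks x i j dFI dFI1 HKp HKs HpQ HsQ Hq).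
  2:{ intros y Hy. rewrite !hank_eq by auto. fold Kp Ks. simpl. ring. }
  rewrite hank_eq by auto. fold Ks.
  assert (0 < w ^ 2) by (apply pow_lt; lra).
  rewrite cpx_gamma by (apply Rgt_not_eq; nra).
  unfold HI, HR, P, d. reflexivity.
Qed.

Definition B0 (w1 : R) (f : R -> R) := exists C, forall w, 0 < w < w1 -> Rabs (f w) <= C.
Definition BL (w1 : R) (f : R -> R) := exists C, forall w, 0 < w < w1 -> Rabs (f w) <= C * (1 + Rabs (ln w)).

Lemma B0_const w1 c : B0 w1 (fun _ => c).
Proof. exists (Rabs c). intros; lra. Qed.
Lemma B0_plus w1 f g : B0 w1 f -> B0 w1 g -> B0 w1 (fun w => f w + g w).
Proof. intros [C1 H1] [C2 H2]. exists (C1 + C2). intros w Hw.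
  eapply Rle_trans; [apply Rabs_triang|]. specialize (H1 w Hw); specialize (H2 w Hw); lra. Qed.
Lemma B0_opp w1 f : B0 w1 f -> B0 w1 (fun w => - f w).
Proof. intros [C1 H1]. exists C1. intros w Hw. rewrite Rabs_Ropp; auto. Qed.
Lemma B0_minus w1 f g : B0 w1 f -> B0 w1 g -> B0 w1 (fun w => f w - g w).
Proof. intros H1 H2. apply (B0_plus w1 f (fun w => - g w)); auto. apply B0_opp; auto. Qed.
Lemma B0_mult w1 f g : B0 w1 f -> B0 w1 g -> B0 w1 (fun w => f w * g w).
Proof. intros [C1 H1] [C2 H2]. exists (C1 * C2). intros w Hw. rewrite Rabs_mult.
  specialize (H1 w Hw); specialize (H2 w Hw). apply Rmult_le_compat; auto; apply Rabs_pos. Qed.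
Lemma B0_div w1 f c : B0 w1 f -> B0 w1 (fun w => f w / c).
Proof. intros H. apply (B0_mult w1 f (fun _ => / c)); auto. apply B0_const. Qed.
Lemma B0_pow w1 n : w1 <= 1 -> B0 w1 (fun w => w ^ n).
Proof. intros H. exists 1. intros w Hw. rewrite <- RPow_abs. rewrite <- (pow1 n). apply pow_incr.
  rewrite Rabs_pos_eq; lra. Qed.
Lemma B0_pow' w1 f n : B0 w1 f -> B0 w1 (fun w => f w ^ n).
Proof. intros [C H]. exists (C ^ n). intros w Hw. rewrite <- RPow_abs. apply pow_incr. split; [apply Rabs_pos|auto]. Qed.
Lemma B0_comp w1 (r : R -> R) (s : R -> R) M :
  (forall t, Rabs t <= /2 -> Rabs (r t) <= M) -> (forall w, 0 < w < w1 -> Rabs (s w) <= /2) ->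
  B0 w1 (fun w => r (s w)).
Proof. intros Hr Hs. exists M. intros; auto. Qed.

Lemma BL_B0 w1 f : B0 w1 f -> BL w1 f.
Proof. intros [C H]. exists (Rmax C 0). intros w Hw. specialize (H w Hw).
  generalize (Rmax_l C 0) (Rmax_r C 0) (Rabs_pos (ln w)). nra. Qed.
Lemma BL_ln w1 : BL w1 (fun w => ln w).
Proof. exists 1. intros. lra. Qed.
Lemma BL_pos w1 f : BL w1 f -> exists C, 0 <= C /\ forall w, 0 < w < w1 -> Rabs (f w) <= C * (1 + Rabs (ln w)).
Proof. intros [C H]. exists (Rmax C 0). split; [apply Rmax_r|]. intros w Hw. specialize (H w Hw).
  generalize (Rmax_l C 0) (Rabs_pos (ln w)). nra. Qed.
Lemma BL_plus w1 f g : BL w1 f -> BL w1 g -> BL w1 (fun w => f w + g w).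
Proof. intros H1 H2. apply BL_pos in H1 as [C1 [P1 H1]]. apply BL_pos in H2 as [C2 [P2 H2]].
  exists (C1 + C2). intros w Hw.
  eapply Rle_trans; [apply Rabs_triang|]. specialize (H1 w Hw); specialize (H2 w Hw); lra. Qed.
Lemma BL_opp w1 f : BL w1 f -> BL w1 (fun w => - f w).
Proof. intros [C1 H1]. exists C1. intros w Hw. rewrite Rabs_Ropp; auto. Qed.
Lemma BL_minus w1 f g : BL w1 f -> BL w1 g -> BL w1 (fun w => f w - g w).
Proof. intros H1 H2. apply (BL_plus w1 f (fun w => - g w)); auto. apply BL_opp; auto. Qed.
Lemma BL_mulB w1 f g : B0 w1 f -> BL w1 g -> BL w1 (fun w => f w * g w).
Proof. intros [C1 H1] H2. apply BL_pos in H2 as [C2 [P2 H2]]. exists (C1 * C2). intros w Hw. rewrite Rabs_mult.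
  specialize (H1 w Hw); specialize (H2 w Hw). rewrite Rmult_assoc. apply Rmult_le_compat; auto; apply Rabs_pos. Qed.
Lemma BL_Bmul w1 f g : BL w1 f -> B0 w1 g -> BL w1 (fun w => f w * g w).
Proof. intros H1 H2. destruct (BL_mulB w1 g f H2 H1) as [C H]. exists C. intros w Hw. rewrite Rmult_comm. apply (H w Hw). Qed.
Lemma BL_div w1 f c : BL w1 f -> BL w1 (fun w => f w / c).
Proof. intros H. apply (BL_Bmul w1 f (fun _ => / c)); auto. apply B0_const. Qed.

Ltac leafr :=
  match goal with
  | |- B0 _ (fun w => PSeries ?a (@?s w)) =>
      apply (B0_comp _ (PSeries a) s 2);
      [ intros ? ?; apply cb1_bound; auto; repeat apply cb1_decr;
        first [apply cb_aj | apply cb_aj1 | apply cb_aj2 | apply cb_asg | apply cb_asg1 | apply cb_asg2]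
      | assumption ]
  end.

Ltac b0 := match goal with
 | |- B0 _ (fun w => ?c) => apply B0_const
 | |- B0 _ (fun w => @?f w + @?g w) => apply (B0_plus _ f g); b0
 | |- B0 _ (fun w => @?f w - @?g w) => apply (B0_minus _ f g); b0
 | |- B0 _ (fun w => @?f w * @?g w) => apply (B0_mult _ f g); b0
 | |- B0 _ (fun w => @?f w / ?c) => apply (B0_div _ f c); b0
 | |- B0 _ (fun w => - @?f w) => apply (B0_opp _ f); b0
 | |- B0 _ (fun w => w ^ _) => apply B0_pow; lra
 | |- B0 _ (fun w => @?f w ^ ?n) => apply (B0_pow' _ f n); b0
 | |- B0 _ _ => leafr
 end.

Ltac bl := match goal with
 | |- BL _ (fun w => ln w) => apply BL_ln
 | |- BL _ (fun w => @?f w + @?g w) => apply (BL_plus _ f g); bl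
 | |- BL _ (fun w => @?f w - @?g w) => apply (BL_minus _ f g); bl
 | |- BL _ (fun w => - @?f w) => apply (BL_opp _ f); bl
 | |- BL _ (fun w => @?f w / ?c) => apply (BL_div _ f c); bl
 | |- BL _ (fun w => @?f w * @?g w) =>
     first [ apply (BL_mulB _ f g); [solve [b0] | bl]
           | apply (BL_Bmul _ f g); [bl | solve [b0]] ]
 | |- BL _ _ => apply BL_B0; solve [b0]
 end.

Definition Lam (L lw : R) := lw + L / 2 + euler_gamma.
Definition RF (c q L lw s r0 t0 : R) := (c * q) ^ 2 * (Lam L lw * (/4 + s * r0) + t0).
Definition RF1 (c q L lw r0 r1 t1 : R) := (c * q) ^ 2 * (r0 / 2 + Lam L lw * r1 + t1).
Definition RF2 (c q L lw r0 r1 r2 t2 : R) := (c * q) * (- r0 / 2 + r1 + Lam L lw * r2 + t2).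

Lemma re_ident (lam mu rho delta eps w q P d lw lq lm la lr ld le l2 : R)
  (r0s r1s r2s t0s t1s t2s r0p r1p r2p t0p t1p t2p : R) :
  0 < mu -> 0 < lam + 2 * mu -> 0 < rho -> 0 < delta -> 0 < eps -> 0 < w -> 0 < q ->
  let mu' := mu / delta in let a' := lam / delta + 2 * (mu / delta) in let rho' := rho / eps in
  let cS := rho' / (4 * mu') in let cP := rho' / (4 * a') in
  let ss := cS * w ^ 2 * q in let sp := cP * w ^ 2 * q in
  let Ls := lr - le - 2 * l2 - lm + ld + lq in let Lp := lr - le - 2 * l2 - la + ld + lq in
  let Js := 1 - ss + ss^2/4 + ss^3 * r0s in let Jp := 1 - sp + sp^2/4 + sp^3 * r0p in
  let J1s := -1 + ss/2 + ss^2 * r1s in let J1p := -1 + sp/2 + sp^2 * r1p in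
  let J2s := /2 + ss * r2s in let J2p := /2 + sp * r2p in
  let Sgs := ss + ss^2 * t0s in
  let Sg1s := 1 - 3/4 * ss + ss^2 * t1s in let Sg1p := 1 - 3/4 * sp + sp^2 * t1p in
  let Sg2s := -3/4 + ss * t2s in let Sg2p := -3/4 + sp * t2p in
  let lns := Ls + 2 * lw in let lnp := Lp + 2 * lw in
  let FIs := 2 / PI * ((lns / 2 + euler_gamma) * Js + Sgs) in
  let FI1s := 2 / PI * (Js / (2 * ss) + (lns / 2 + euler_gamma) * J1s + Sg1s) in
  let FI1p := 2 / PI * (Jp / (2 * sp) + (lnp / 2 + euler_gamma) * J1p + Sg1p) in
  let FI2s := 2 / PI * (- Js / (2 * ss ^ 2) + J1s / ss + (lns / 2 + euler_gamma) * J2s + Sg2s) in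
  let FI2p := 2 / PI * (- Jp / (2 * sp ^ 2) + J1p / sp + (lnp / 2 + euler_gamma) * J2p + Sg2p) in
  let Ks := cS * w ^ 2 in let Kp := cP * w ^ 2 in
  let HI := 4 * (Kp ^ 2 * FI2p - Ks ^ 2 * FI2s) * P + 2 * (Kp * FI1p - Ks * FI1s) * d in
  let tau2 := delta / eps in
  let lrt := lr / 2 + (ld - le) / 2 in
  FIs * d / (4 * mu') - HI / (4 * w ^ 2 * rho') -
  (delta * (alpha1 lam mu * (lq / 2) * d - alpha2 lam mu * P / q)
   + delta * (alpha1 lam mu * (lrt + lw) + (alpha1 lam mu / 2 * (2 * euler_gamma - 2 * l2) + alpha2 lam mu / 2
     - / (8 * PI) * (/ mu * lm + / (2 * mu + lam) * la))) * d
  + delta * w ^ 2 * lw * rho * tau2 * (beta2 lam mu * q * d + beta3 lam mu * P)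
  + delta * w ^ 2 * rho * tau2 * lrt * (beta2 lam mu * q * d + beta3 lam mu * P)
  + delta * w ^ 2 * rho * tau2 * (
     ((/2 * (2 * euler_gamma - 2 * l2) - 1) * beta2 lam mu - / 8 * beta3 lam mu
       + / (2 ^ 6 * PI) * (3 / mu ^ 2 * lm + la / (2 * mu + lam) ^ 2)) * (q * d)
     + (beta2 lam mu * (lq / 2) * q * d + beta3 lam mu * (lq / 2) * P)
     + (/ 4 * (2 * (2 * euler_gamma - 2 * l2) - 3) * beta3 lam mu
        - / (2 ^ 5 * PI) * (lm / mu ^ 2 - la / (2 * mu + lam) ^ 2)) * P))
  = w ^ 4 * (d / (2 * PI * mu') * RF cS q Ls lw ss r0s t0s
     - / (2 * PI * rho') * (4 * cP ^ 2 * RF2 cP q Lp lw r0p r1p r2p t2p * P + 2 * cP * RF1 cP q Lp lw r0p r1p t1p * d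
                           - 4 * cS ^ 2 * RF2 cS q Ls lw r0s r1s r2s t2s * P - 2 * cS * RF1 cS q Ls lw r0s r1s t1s * d)).
Proof.
  intros Hmu Ha Hrho Hdel Heps Hw Hq. intros.
  unfold RF, RF1, RF2, Lam, alpha1, alpha2, beta2, beta3.
  subst mu' a' rho' cS cP ss sp Ls Lp Js Jp J1s J1p J2s J2p Sgs Sg1s Sg1p Sg2s Sg2p lns lnp FIs FI1s FI1p FI2s FI2p Ks Kp HI tau2 lrt.
  field. repeat split; try lra; try apply PI_neq0.
Qed.

Lemma im_ident (lam mu rho delta eps w q P d : R) (r0s r1s r2s r1p r2p : R) :
  0 < mu -> 0 < lam + 2 * mu -> 0 < rho -> 0 < delta -> 0 < eps -> 0 < w -> 0 < q ->
  let mu' := mu / delta in let a' := lam / delta + 2 * (mu / delta) in let rho' := rho / eps in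
  let cS := rho' / (4 * mu') in let cP := rho' / (4 * a') in
  let ss := cS * w ^ 2 * q in let sp := cP * w ^ 2 * q in
  let Js := 1 - ss + ss^2/4 + ss^3 * r0s in
  let J1s := -1 + ss/2 + ss^2 * r1s in let J1p := -1 + sp/2 + sp^2 * r1p in
  let J2s := /2 + ss * r2s in let J2p := /2 + sp * r2p in
  let Ks := cS * w ^ 2 in let Kp := cP * w ^ 2 in
  let HR := 4 * (Kp ^ 2 * J2p - Ks ^ 2 * J2s) * P + 2 * (Kp * J1p - Ks * J1s) * d in
  let tau2 := delta / eps in
  - Js * d / (4 * mu') + HR / (4 * w ^ 2 * rho') -
  (delta * (alpha1 lam mu / 2 * (- PI)) * d
  + delta * w ^ 2 * rho * tau2 * (
     (/2 * (- PI) * beta2 lam mu) * (q * d)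
     + (/ 4 * (2 * (- PI)) * beta3 lam mu) * P))
  = w ^ 4 * (- (d / (4 * mu')) * (cS * q) ^ 2 * (/4 + ss * r0s)
     + / (4 * rho') * (4 * cP ^ 2 * (cP * q) * r2p * P + 2 * cP * (cP * q) ^ 2 * r1p * d
                      - 4 * cS ^ 2 * (cS * q) * r2s * P - 2 * cS * (cS * q) ^ 2 * r1s * d)).
Proof.
  intros Hmu Ha Hrho Hdel Heps Hw Hq. intros.
  unfold alpha1, alpha2, beta2, beta3.
  subst mu' a' rho' cS cP ss sp Js J1s J1p J2s J2p Ks Kp HR tau2.
  field. repeat split; try lra; try apply PI_neq0.
Qed.

Definition r0 s := PSeries (PS_decr_n aj 3) s.
Definition r1 s := PSeries (PS_decr_n (PS_derive aj) 2) s.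
Definition r2 s := PSeries (PS_decr_n (PS_derive (PS_derive aj)) 1) s.
Definition t0 s := PSeries (PS_decr_n asg 2) s.
Definition t1 s := PSeries (PS_decr_n (PS_derive asg) 2) s.
Definition t2 s := PSeries (PS_decr_n (PS_derive (PS_derive asg)) 1) s.

Definition ReQf (lam mu rho delta eps q P d w : R) : R :=
  let mu' := mu / delta in let a' := lam / delta + 2 * (mu / delta) in let rho' := rho / eps in
  let cS := rho' / (4 * mu') in let cP := rho' / (4 * a') in
  let ss := cS * w ^ 2 * q in let sp := cP * w ^ 2 * q in
  let Ls := ln rho - ln eps - 2 * ln 2 - ln mu + ln delta + ln q in
  let Lp := ln rho - ln eps - 2 * ln 2 - ln (2 * mu + lam) + ln delta + ln q in
  let lw := ln w in
  d / (2 * PI * mu') * RF cS q Ls lw ss (r0 ss) (t0 ss)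
     - / (2 * PI * rho') * (4 * cP ^ 2 * RF2 cP q Lp lw (r0 sp) (r1 sp) (r2 sp) (t2 sp) * P
                           + 2 * cP * RF1 cP q Lp lw (r0 sp) (r1 sp) (t1 sp) * d
                           - 4 * cS ^ 2 * RF2 cS q Ls lw (r0 ss) (r1 ss) (r2 ss) (t2 ss) * P
                           - 2 * cS * RF1 cS q Ls lw (r0 ss) (r1 ss) (t1 ss) * d).

Definition ImQf (lam mu rho delta eps q P d w : R) : R :=
  let mu' := mu / delta in let a' := lam / delta + 2 * (mu / delta) in let rho' := rho / eps in
  let cS := rho' / (4 * mu') in let cP := rho' / (4 * a') in
  let ss := cS * w ^ 2 * q in let sp := cP * w ^ 2 * q in
  - (d / (4 * mu')) * (cS * q) ^ 2 * (/4 + ss * r0 ss)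
     + / (4 * rho') * (4 * cP ^ 2 * (cP * q) * r2 sp * P + 2 * cP * (cP * q) ^ 2 * r1 sp * d
                      - 4 * cS ^ 2 * (cS * q) * r2 ss * P - 2 * cS * (cS * q) ^ 2 * r1 ss * d).

Lemma Q_bounds lam mu rho delta eps q P d w1 :
  w1 <= 1 ->
  (forall w, 0 < w < w1 -> Rabs (rho / eps / (4 * (mu / delta)) * w ^ 2 * q) <= /2) ->
  (forall w, 0 < w < w1 -> Rabs (rho / eps / (4 * (lam / delta + 2 * (mu / delta))) * w ^ 2 * q) <= /2) ->
  BL w1 (ReQf lam mu rho delta eps q P d) /\ BL w1 (ImQf lam mu rho delta eps q P d).
Proof.
  intros Hw1 Hs1 Hs2. split.
  - unfold ReQf, RF, RF1, RF2, Lam, r0, r1, r2, t0, t1, t2. cbv beta zeta. bl.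
  - unfold ImQf, r0, r1, r2. cbv beta zeta. bl.
Qed.

Lemma cmod_bnd (a b : R) (E : C) : Cmod ((a, b) - E)%C <= 2 * (Rabs (a - fst E) + Rabs (b - snd E)).
Proof.
  destruct E as [e1 e2]. eapply Rle_trans; [apply Cmod_2Rmax|]. simpl.
  replace (a + - e1) with (a - e1) by ring. replace (b + - e2) with (b - e2) by ring.
  assert (sqrt 2 <= 2).
  { rewrite <- (sqrt_square 2) at 2 by lra. apply sqrt_le_1_alt. lra. }
  assert (Rmax (Rabs (a - e1)) (Rabs (b - e2)) <= Rabs (a - e1) + Rabs (b - e2)).
  { apply Rmax_lub; generalize (Rabs_pos (a - e1)) (Rabs_pos (b - e2)); lra. }
  assert (0 <= sqrt 2) by apply sqrt_pos.
  assert (0 <= Rmax (Rabs (a - e1)) (Rabs (b - e2))) by (eapply Rle_trans; [apply Rabs_pos|apply Rmax_l]).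
  nra.
Qed.

Lemma Q_bounds_all lam mu rho delta eps x w1 :
  w1 <= 1 ->
  (forall w, 0 < w < w1 -> Rabs (rho / eps / (4 * (mu / delta)) * w ^ 2 * qf x) <= /2) ->
  (forall w, 0 < w < w1 -> Rabs (rho / eps / (4 * (lam / delta + 2 * (mu / delta))) * w ^ 2 * qf x) <= /2) ->
  exists C, 0 <= C /\ forall (i j : bool) w, 0 < w < w1 ->
    Rabs (ReQf lam mu rho delta eps (qf x) (coord x i * coord x j) (kron i j) w)
    + Rabs (ImQf lam mu rho delta eps (qf x) (coord x i * coord x j) (kron i j) w) <= C * (1 + Rabs (ln w)).
Proof.
  intros Hw1 Hs1 Hs2.
  destruct (Q_bounds lam mu rho delta eps (qf x) (coord x true * coord x true) (kron true true) w1 Hw1 Hs1 Hs2) as [A1 A2].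
  destruct (Q_bounds lam mu rho delta eps (qf x) (coord x true * coord x false) (kron true false) w1 Hw1 Hs1 Hs2) as [B1 B2].
  destruct (Q_bounds lam mu rho delta eps (qf x) (coord x false * coord x true) (kron false true) w1 Hw1 Hs1 Hs2) as [C1 C2].
  destruct (Q_bounds lam mu rho delta eps (qf x) (coord x false * coord x false) (kron false false) w1 Hw1 Hs1 Hs2) as [D1 D2].
  apply BL_pos in A1 as [a1 [Pa1 Ha1]]. apply BL_pos in A2 as [a2 [Pa2 Ha2]].
  apply BL_pos in B1 as [b1 [Pb1 Hb1]]. apply BL_pos in B2 as [b2 [Pb2 Hb2]].
  apply BL_pos in C1 as [c1 [Pc1 Hc1]]. apply BL_pos in C2 as [c2 [Pc2 Hc2]].
  apply BL_pos in D1 as [d1 [Pd1 Hd1]]. apply BL_pos in D2 as [d2 [Pd2 Hd2]].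
  exists (a1 + a2 + b1 + b2 + c1 + c2 + d1 + d2). split; [lra|].
  intros i j w Hw. assert (0 <= 1 + Rabs (ln w)) by (generalize (Rabs_pos (ln w)); lra).
  destruct i, j.
  - specialize (Ha1 w Hw); specialize (Ha2 w Hw). nra.
  - specialize (Hb1 w Hw); specialize (Hb2 w Hw). nra.
  - specialize (Hc1 w Hw); specialize (Hc2 w Hw). nra.
  - specialize (Hd1 w Hw); specialize (Hd2 w Hw). nra.
Qed.

Lemma ln_sqrt a : 0 < a -> ln (sqrt a) = ln a / 2.
Proof.
  intros Ha. assert (Hs : 0 < sqrt a) by (apply sqrt_lt_R0; auto).
  rewrite <- (sqrt_sqrt a) at 2 by lra. rewrite ln_mult by auto. field.
Qed.

Theorem proposition2p3 (lam mu rho delta eps : R) (x : R * R) :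
  0 < mu -> 0 < lam + 2 * mu -> 0 < rho -> 0 < delta -> 0 < eps ->
  x <> (0, 0) ->
  let tau := sqrt (delta / eps) in
  exists K w0 : R, 0 < w0 /\
    forall w : R, 0 < w < w0 ->
    forall i j : bool,
      Cmod (Gamma_omega (lam / delta) (mu / delta) (rho / eps) w x i j
            - expansion lam mu rho delta tau w x i j)%C
      <= K * Rabs (delta * tau ^ 4 * w ^ 4 * ln w + delta * tau ^ 4 * w ^ 4).
Proof.
  intros Hmu Ha Hrho Hdel Heps Hx tau.
  assert (Hq : 0 < qf x).
  { destruct x as [x1 x2]. unfold qf; cbn [fst snd].
    destruct (Req_dec x1 0) as [E1|E1]; destruct (Req_dec x2 0) as [E2|E2].
    - subst. exfalso; apply Hx; reflexivity.
    - assert (0 < Rsqr x2) by (apply Rsqr_pos_lt; auto). unfold Rsqr in *. nra.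
    - assert (0 < Rsqr x1) by (apply Rsqr_pos_lt; auto). unfold Rsqr in *. nra.
    - assert (0 < Rsqr x1) by (apply Rsqr_pos_lt; auto). unfold Rsqr in *. nra. }
  assert (Hmd : 0 < mu / delta) by (apply Rdiv_lt_0_compat; auto).
  assert (Had : 0 < lam / delta + 2 * (mu / delta)).
  { replace (lam / delta + 2 * (mu / delta)) with ((lam + 2 * mu) / delta) by (field; lra).
    apply Rdiv_lt_0_compat; auto. }
  assert (Hre : 0 < rho / eps) by (apply Rdiv_lt_0_compat; auto).
  assert (HcS : 0 < rho / eps / (4 * (mu / delta))) by (apply Rdiv_lt_0_compat; lra).
  assert (HcP : 0 < rho / eps / (4 * (lam / delta + 2 * (mu / delta)))) by (apply Rdiv_lt_0_compat; lra).
  set (cS := rho / eps / (4 * (mu / delta))) in *.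
  set (cP := rho / eps / (4 * (lam / delta + 2 * (mu / delta)))) in *.
  set (q := qf x) in *.
  set (w1 := Rmin (exp (-2)) (sqrt (/ (4 * q * (cS + cP))))).
  assert (Hz : 0 < / (4 * q * (cS + cP))) by (apply Rinv_0_lt_compat; nra).
  assert (Hw1 : 0 < w1) by (apply Rmin_pos; [apply exp_pos | apply sqrt_lt_R0; auto]).
  assert (He2 : exp (-2) < 1) by (rewrite <- exp_0; apply exp_increasing; lra).
  assert (Hw1le : w1 <= 1) by (unfold w1; generalize (Rmin_l (exp (-2)) (sqrt (/ (4 * q * (cS + cP))))); lra).
  assert (Hkey : forall w, 0 < w < w1 -> w ^ 2 * (4 * q * (cS + cP)) < 1).
  { intros w Hw. assert (w < sqrt (/ (4 * q * (cS + cP)))) by (generalize (Rmin_r (exp (-2)) (sqrt (/ (4 * q * (cS + cP))))); unfold w1 in Hw; lra).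
    assert (w ^ 2 < / (4 * q * (cS + cP))).
    { rewrite <- (pow2_sqrt (/ (4 * q * (cS + cP)))) by lra. nra. }
    apply (Rmult_lt_compat_r (4 * q * (cS + cP))) in H0; [|nra]. rewrite Rinv_l in H0; nra. }
  assert (Hs1 : forall w, 0 < w < w1 -> Rabs (cS * w ^ 2 * q) <= /2).
  { intros w Hw. specialize (Hkey w Hw). assert (0 < w ^ 2) by (apply pow_lt; lra).
    rewrite Rabs_pos_eq by (apply Rmult_le_pos; [|lra]; apply Rmult_le_pos; lra). nra. }
  assert (Hs2 : forall w, 0 < w < w1 -> Rabs (cP * w ^ 2 * q) <= /2).
  { intros w Hw. specialize (Hkey w Hw). assert (0 < w ^ 2) by (apply pow_lt; lra).
    rewrite Rabs_pos_eq by (apply Rmult_le_pos; [|lra]; apply Rmult_le_pos; lra). nra. }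
  destruct (Q_bounds_all lam mu rho delta eps x w1 Hw1le Hs1 Hs2) as [C [HC0 HC]].
  assert (Htau : 0 < tau) by (apply sqrt_lt_R0; apply Rdiv_lt_0_compat; auto).
  exists (6 * C / (delta * tau ^ 4)), w1. split; [exact Hw1|].
  intros w Hw i j.
  assert (Hwp : 0 < w) by lra.
  assert (Hw2 : 0 < w ^ 2) by (apply pow_lt; lra).
  assert (HKs : (w / sqrt (mu / delta / (rho / eps)) / 2) ^ 2 = cS * w ^ 2).
  { assert (Hp : 0 < mu / delta / (rho / eps)) by (apply Rdiv_lt_0_compat; auto).
    assert (Hs : 0 < sqrt (mu / delta / (rho / eps))) by (apply sqrt_lt_R0; auto).
    replace ((w / sqrt (mu / delta / (rho / eps)) / 2) ^ 2) with (w ^ 2 / (4 * (sqrt (mu / delta / (rho / eps))) ^ 2)) by (field; lra).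
    rewrite pow2_sqrt by lra. unfold cS. field. repeat split; lra. }
  assert (HKp : (w / sqrt ((lam / delta + 2 * (mu / delta)) / (rho / eps)) / 2) ^ 2 = cP * w ^ 2).
  { assert (Hp : 0 < (lam / delta + 2 * (mu / delta)) / (rho / eps)) by (apply Rdiv_lt_0_compat; auto).
    assert (Hs : 0 < sqrt ((lam / delta + 2 * (mu / delta)) / (rho / eps))) by (apply sqrt_lt_R0; auto).
    replace ((w / sqrt ((lam / delta + 2 * (mu / delta)) / (rho / eps)) / 2) ^ 2) with (w ^ 2 / (4 * (sqrt ((lam / delta + 2 * (mu / delta)) / (rho / eps))) ^ 2)) by (field; lra).
    rewrite pow2_sqrt by lra. unfold cP. field. repeat split; lra. }
  assert (Hln2 : ln 4 = 2 * ln 2).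
  { replace 4 with (2 * 2) by ring. rewrite ln_mult by lra. ring. }
  assert (HlnS : ln (cS * w ^ 2 * q) = (ln rho - ln eps - 2 * ln 2 - ln mu + ln delta + ln q) + 2 * ln w).
  { rewrite (ln_mult (cS * w ^ 2) q), (ln_mult cS (w ^ 2)), ln_pow by nra.
    unfold cS. rewrite (ln_div (rho / eps)), (ln_div rho eps), (ln_mult 4 (mu / delta)), (ln_div mu delta) by lra.
    rewrite Hln2. simpl INR. ring. }
  assert (HlnP : ln (cP * w ^ 2 * q) = (ln rho - ln eps - 2 * ln 2 - ln (2 * mu + lam) + ln delta + ln q) + 2 * ln w).
  { rewrite (ln_mult (cP * w ^ 2) q), (ln_mult cP (w ^ 2)), ln_pow by nra.
    unfold cP. replace (lam / delta + 2 * (mu / delta)) with ((2 * mu + lam) / delta) by (field; lra).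
    assert (0 < (2 * mu + lam) / delta) by (apply Rdiv_lt_0_compat; lra).
    rewrite (ln_div (rho / eps)), (ln_div rho eps), (ln_mult 4 ((2 * mu + lam) / delta)), (ln_div (2 * mu + lam) delta) by lra.
    rewrite Hln2. simpl INR. ring. }
  assert (Htau2 : tau ^ 2 = delta / eps) by (unfold tau; rewrite pow2_sqrt; [reflexivity|apply Rlt_le, Rdiv_lt_0_compat; auto]).
  assert (Hlt : ln tau = (ln delta - ln eps) / 2).
  { unfold tau. rewrite ln_sqrt by (apply Rdiv_lt_0_compat; auto). rewrite ln_div by lra. field. }
  assert (Hl1 : ln (sqrt rho * tau * w) = ln rho / 2 + (ln delta - ln eps) / 2 + ln w).
  { assert (0 < sqrt rho) by (apply sqrt_lt_R0; lra).
    rewrite (ln_mult (sqrt rho * tau) w), (ln_mult (sqrt rho) tau) by nra. rewrite ln_sqrt, Hlt by lra. ring. }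
  assert (Hl2 : ln (sqrt rho * tau) = ln rho / 2 + (ln delta - ln eps) / 2).
  { assert (0 < sqrt rho) by (apply sqrt_lt_R0; lra).
    rewrite (ln_mult (sqrt rho) tau) by nra. rewrite ln_sqrt, Hlt by lra. ring. }
  assert (Hn2 : norm2 x ^ 2 = q) by (unfold norm2, q, qf; rewrite pow2_sqrt; [reflexivity | nra]).
  assert (Hnl : ln (norm2 x) = ln q / 2) by (unfold norm2, q, qf; rewrite ln_sqrt; [reflexivity|exact Hq]).
  pose proof (Gamma_explicit (lam / delta) (mu / delta) (rho / eps) w x i j Hmd Had Hre Hwp Hq) as GE.
  cbv zeta in GE. change (qf x) with q in GE. rewrite HKs, HKp in GE.
  specialize (Hkey w Hw).
  rewrite GE by nra. clear GE.
  eapply Rle_trans; [apply cmod_bnd|].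
  match goal with |- 2 * (Rabs (?A - fst ?E) + Rabs (?B - snd ?E)) <= _ =>
    assert (ERe : A - fst E = w ^ 4 * ReQf lam mu rho delta eps q (coord x i * coord x j) (kron i j) w);
    [| assert (EIm : B - snd E = w ^ 4 * ImQf lam mu rho delta eps q (coord x i * coord x j) (kron i j) w);
       [| rewrite ERe, EIm ]] end.
  - rewrite exp_re. unfold Gamma0, Gamma1, FI, FI1, FI2.
    assert (S1 := Hs1 w Hw). assert (S2 := Hs2 w Hw).
    rewrite (J_exp (cS * w ^ 2 * q)), (J1_exp (cS * w ^ 2 * q)), (J2_exp (cS * w ^ 2 * q)),
            (Sg_exp (cS * w ^ 2 * q)), (Sg1_exp (cS * w ^ 2 * q)), (Sg2_exp (cS * w ^ 2 * q)) by exact S1.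
    rewrite (J_exp (cP * w ^ 2 * q)), (J1_exp (cP * w ^ 2 * q)), (J2_exp (cP * w ^ 2 * q)),
            (Sg1_exp (cP * w ^ 2 * q)), (Sg2_exp (cP * w ^ 2 * q)) by exact S2.
    rewrite HlnS, HlnP, Hl1, Hl2, Htau2, Hn2, Hnl.
    unfold ReQf, RF, RF1, RF2, Lam, r0, r1, r2, t0, t1, t2. cbv beta zeta.
    unfold cS, cP. unfold alpha1, alpha2, beta2, beta3.
    field. repeat split; try lra; try apply PI_neq0.
  - rewrite exp_im.
    assert (S1 := Hs1 w Hw). assert (S2 := Hs2 w Hw).
    rewrite (J_exp (cS * w ^ 2 * q)), (J1_exp (cS * w ^ 2 * q)), (J2_exp (cS * w ^ 2 * q)) by exact S1.
    rewrite (J1_exp (cP * w ^ 2 * q)), (J2_exp (cP * w ^ 2 * q)) by exact S2.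
    rewrite Htau2, Hn2.
    unfold ImQf, r0, r1, r2. cbv beta zeta.
    unfold cS, cP. unfold alpha1, alpha2, beta2, beta3.
    field. repeat split; try lra; try apply PI_neq0.
  - specialize (HC i j w Hw). change (qf x) with q in HC.
    assert (Hlw : ln w < -2).
    { rewrite <- (ln_exp (-2)). apply ln_increasing; [lra|].
      generalize (Rmin_l (exp (-2)) (sqrt (/ (4 * q * (cS + cP))))); unfold w1 in Hw; lra. }
    rewrite (Rabs_left (ln w)) in HC by lra.
    assert (HW : 0 < w ^ 4) by (apply pow_lt; lra).
    assert (HD : 0 < delta * tau ^ 4) by (apply Rmult_lt_0_compat; [lra | apply pow_lt; lra]).
    rewrite !Rabs_mult. rewrite (Rabs_pos_eq (w ^ 4)) by lra.
    replace (delta * tau ^ 4 * w ^ 4 * ln w + delta * tau ^ 4 * w ^ 4) with ((delta * tau ^ 4) * w ^ 4 * (ln w + 1)) by ring.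
    rewrite (Rabs_left ((delta * tau ^ 4) * w ^ 4 * (ln w + 1))).
    2:{ assert (0 < delta * tau ^ 4 * w ^ 4) by nra. nra. }
    replace (6 * C / (delta * tau ^ 4) * - (delta * tau ^ 4 * w ^ 4 * (ln w + 1))) with (6 * C * w ^ 4 * (- ln w - 1)) by (field; lra).
    set (a := Rabs (ReQf lam mu rho delta eps q (coord x i * coord x j) (kron i j) w)) in *.
    set (b := Rabs (ImQf lam mu rho delta eps q (coord x i * coord x j) (kron i j) w)) in *.
    assert (2 * (w ^ 4 * a + w ^ 4 * b) <= 2 * w ^ 4 * (C * (1 + - ln w))) by nra.
    assert (2 * w ^ 4 * (C * (1 + - ln w)) <= 6 * C * w ^ 4 * (- ln w - 1)).
    { assert (0 <= C * w ^ 4) by nra. nra. }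
    lra.
Qed.
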